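(* Let $L$ be a finite graded atomic lattice with a sheaf $F$ of finite-dimensional vector spaces and let $\widetilde L$ be its Boolean cover with induced sheaf $F$. Then $$\chi\,\mathrm{HC}_*(\widetilde L;F)=\chi'_{(L,F)}(1)=\sum_{x\in L}\mu_L(\mathbf{0},x)\dim F(x),$$ where $\chi'_{(L,F)}$ is the derivative of $\chi_{(L,F)}(t)=\sum_{x\in L}\mu_L(\mathbf{0},x)t^{\dim F(x)}$.
   Context: Graded atomic lattice: finite lattice with minimum $\mathbf{0}$ and rank function ($rk(\mathbf{0})=0$) in which every element is a join of atoms (rank-$1$ elements). Möbius function: $\mu_L(x,x)=1$, $\mu_L(x,y)=-\sum_{x\le z<y}\mu_L(x,z)$. A sheaf assigns a vector space $F(x)$ to each element and a linear map $F^y_x:F(y)\to F(x)$ for $x\le y$, functorially. $\chi\,\mathrm{HC}_*=\sum_n(-1)^n\dim\mathrm{HC}_n$. Boolean cover: $\widetilde L$ is the lattice of subsets of the atoms of $L$, $f(S)=$ join of $S$ in $L$, induced sheaf $F(S)=F(f(S))$ with maps $F^{f(T)}_{f(S)}$. $\mathrm{HC}_*$ of a Boolean lattice of subsets of $\{a_1,\dots,a_n\}$ with sheaf $G$: homology of $C_k=\bigoplus_{|x|=k}G(x)$, $d=\sum\varepsilon^x_yG^x_y$ over $y\subset x$, $|y|=|x|-1$, $\varepsilon^x_y=(-1)^{j-1}$ when $x=\{a_{i_1},\dots,a_{i_k}\}$ ($i_1<\cdots<i_k$), $y=x\setminus\{a_{i_j}\}$. *)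

(* Defs.v *)
From HB Require Import structures.
From mathcomp Require Import all_boot all_order all_algebra.
Set Implicit Arguments. Unset Strict Implicit. Unset Printing Implicit Defensive.
Import Order.TTheory GRing.Theory Num.Theory.

Section Defs.
Variables (K : fieldType) (d : Order.disp_t) (L : finTBLatticeType d).
Local Open Scope order_scope.

Definition covers (x y : L) : bool :=
  (x < y) && [forall z : L, ~~ ((x < z) && (z < y))].

(* The fuel #|L| is always sufficient (chains have at most #|L| elements). *)
Fixpoint mob_fuel (k : nat) (x y : L) : int :=
  match k with
  | 0 => 0%R
  | k'.+1 => if x == y then 1%R
             else if x <= y then
               (- \sum_(z : L | ((x <= z) && (z < y))%O) mob_fuel k' x z)%R
             else 0%R
  end.
Definition mobius (x y : L) : int := mob_fuel #|L| x y.

Definition chi_poly (n : L -> nat) : {poly int} :=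
  (\sum_(x : L) (mobius \bot x)%:P * 'X^(n x))%R.

Variable rk : L -> nat.

Definition atom_type := {x : L | rk x == 1%N}.

Definition fjoin (S : {set atom_type}) : L := \join_(a in S) val a.

Variable n : L -> nat.                          (* n x = dim F(x) *)
Variable res : forall x y : L, 'M[K]_(n y, n x). (* F^y_x acting on row vectors *)

(* basis of the total chain space: pairs (S, i) with i < dim F(f S) *)
Definition cell := {S : {set atom_type} & 'I_(n (fjoin S))}.
Definition cells (k : nat) : {set cell} := [set c : cell | #|tag c| == k].

(* epsilon^S_T = (-1)^(j-1) where S \ T = {a_{i_j}}: j-1 is the number of
   elements of T (= of S) preceding the removed atom in the fixed order
   a_1 < ... < a_m of the atoms (given by enum_rank). *)
Definition eps_count (S T : {set atom_type}) : nat :=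
  #|[set p : (atom_type * atom_type)%type |
      (p.1 \in T) && (p.2 \in (S :\: T)) && (enum_rank p.1 < enum_rank p.2)%N]|.
Definition eps (S T : {set atom_type}) : K := ((-1) ^+ eps_count S T)%R.

Definition bd (k : nat) : 'M[K]_(#|cells k.+1|, #|cells k|) :=
  \matrix_(r < #|cells k.+1|, c < #|cells k|)
    (let x : cell := enum_val r in let y : cell := enum_val c in
     if tag y \subset tag x then
       (eps (tag x) (tag y) *
        res (fjoin (tag y)) (fjoin (tag x)) (tagged x) (tagged y))%R
     else 0%R).

Definition cycles (k : nat) : 'M[K]_(#|cells k|) :=
  match k with 0 => 1%:M | k'.+1 => kermx (bd k') end.

Definition dimHC (k : nat) : nat :=
  (\rank (cycles k) - \rank (bd k :&: cycles k)%MS)%N.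

(* Euler characteristic; HC_k = 0 for k > number of atoms *)
Definition euler_HC : int :=
  (\sum_(k < #|{: atom_type}|.+1) (-1) ^+ k * (dimHC k)%:Z)%R.

End Defs.

(* Main.v *)
Require Import Defs.
From HB Require Import structures.
From mathcomp Require Import all_boot all_order all_algebra.
From mathcomp Require Import zify ring.
Import Order.TTheory GRing.Theory Num.Theory.
Set Implicit Arguments. Unset Strict Implicit. Unset Printing Implicit Defensive.
Local Open Scope ring_scope.

Lemma chi_deriv (d : Order.disp_t) (L : finTBLatticeType d) (n : L -> nat) :
  ((chi_poly n)^`()).[1%R] = (\sum_(x : L) mobius \bot%O x * (n x)%:Z)%R.
Proof.
rewrite /chi_poly raddf_sum horner_sum; apply: eq_bigr => x _.
rewrite /=.
rewrite mul_polyC derivZ derivXn hornerZ hornerMn hornerXn expr1n. by rewrite natz.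
Qed.

Section Mob.
Variables (d : Order.disp_t) (L : finTBLatticeType d).
Local Open Scope order_scope.

Definition below (x y : L) := #|[set z : L | (x <= z) && (z < y)]|.

Lemma mob_fuel_stable k k' (x y : L) :
  (below x y < k)%N -> (below x y < k')%N -> mob_fuel k x y = mob_fuel k' x y.
Proof.
elim: k k' y => [|k IH] [|k'] y //= hk hk'.
rewrite ltnS in hk; rewrite ltnS in hk'.
case: eqP => // _; case: ifP => // _; congr (- _)%R.
apply: eq_bigr => z /andP[xz zy]; apply: IH.
  apply: leq_trans hk; apply: proper_card; apply/properP; split.
    by apply/subsetP => w; rewrite !inE => /andP[-> /lt_trans ->].
  by exists z; rewrite !inE ?xz ?zy ?ltxx.
apply: leq_trans hk'; apply: proper_card; apply/properP; split.
  by apply/subsetP => w; rewrite !inE => /andP[-> /lt_trans ->].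
by exists z; rewrite !inE ?xz ?zy ?ltxx.
Qed.

Lemma below_mono (x y z : L) : x <= z -> z < y -> (below x z < below x y)%N.
Proof.
move=> xz zy; apply: proper_card; apply/properP; split.
  by apply/subsetP => w; rewrite !inE => /andP[-> /lt_trans ->].
by exists z; rewrite !inE ?xz ?zy ?ltxx.
Qed.

Lemma below_lt (x y : L) : (below x y < #|L|)%N.
Proof.
apply: proper_card; apply/properP; split; first exact: subset_predT.
by exists y; rewrite ?inE ?ltxx ?andbF.
Qed.

Lemma mobius_rec (x y : L) : x != y -> x <= y ->
  mobius x y = (- \sum_(z : L | ((x <= z) && (z < y))%O) mobius x z)%R.
Proof.
move=> nxy xy; rewrite {1}/mobius.
have := below_lt x y; case E: #|L| => [|k] // _ /=.
rewrite (negbTE nxy) xy; congr (- _)%R; apply: eq_bigr => z /andP[xz zy].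
apply: mob_fuel_stable; rewrite ?below_lt //.
rewrite -ltnS -E; apply: leq_trans (below_lt x y).
apply: proper_card; apply/properP; split.
  by apply/subsetP => w; rewrite !inE => /andP[-> /lt_trans ->].
by exists z; rewrite !inE ?xz ?zy ?ltxx.
Qed.

Lemma mobius_refl (x : L) : mobius x x = 1%R.
Proof.
by rewrite /mobius; have := below_lt x x; case: #|L| => //= k _; rewrite eqxx.
Qed.
End Mob.
Section Cross.
Variables (d : Order.disp_t) (L : finTBLatticeType d) (rk : L -> nat).
Hypothesis rk0 : rk \bot%O = 0%N.
Hypothesis atomic : forall x : L, x = (\join_(a : L | (rk a == 1%N) && (a <= x)%O) a)%O.

Local Notation A := (atom_type rk).

Definition gcc (x : L) : int :=
  \sum_(S : {set A} | fjoin S == x) (-1) ^+ #|S|.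

Lemma fjoin_le (S : {set A}) (x : L) :
  (fjoin S <= x)%O = (S \subset [set a : A | (val a <= x)%O]).
Proof.
apply/joinsP/subsetP => [H a aS|H a aS]; first by rewrite inE H.
by have := H a aS; rewrite inE.
Qed.

Lemma toggle_sum (B : {set A}) : B != set0 ->
  \sum_(S : {set A} | S \subset B) ((-1) ^+ #|S| : int) = 0.
Proof.
case/set0Pn => a aB.
pose t (S : {set A}) := if a \in S then S :\ a else a |: S.
have tK : involutive t.
  move=> S; rewrite {2}/t; case: ifP => aS; rewrite /t.
    by rewrite setD11 setD1K.
  by rewrite setU11 setU1K ?aS.
have tB S : (t S \subset B) = (S \subset B).
  rewrite /t; case: ifP => aS.
    apply/idP/idP => H; last by apply: subset_trans H; apply: subsetDl.
    by rewrite -(setD1K aS) subUset sub1set aB.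
  by rewrite subUset sub1set aB.
have tc S : ((-1) ^+ #|t S| : int) = - (-1) ^+ #|S|.
  rewrite /t; case: ifP => aS.
    by rewrite -{2}(setD1K aS) cardsU1 setD11 exprS mulN1r opprK.
  by rewrite cardsU1 aS exprS mulN1r.
set s := (\sum_(S | _) _).
have : s = - s.
  rewrite {1}/s (reindex_inj (can_inj tK)) /= /s -sumrN.
  by apply: eq_big => S; [exact: tB | move=> _; exact: tc].
lia.
Qed.

Lemma gcc_sum (x : L) :
  \sum_(z : L | (z <= x)%O) gcc z =
  \sum_(S : {set A} | S \subset [set a : A | (val a <= x)%O]) (-1) ^+ #|S|.
Proof.
rewrite [RHS](partition_big (fun S => fjoin S) (fun z => (z <= x)%O)) /=.
  apply: eq_bigr => z zx; apply: eq_bigl => S.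
  by rewrite -fjoin_le; case: eqP => [->|]; rewrite ?zx ?andbF.
by move=> S; rewrite fjoin_le.
Qed.

Lemma atoms_nonempty (x : L) : x != \bot%O ->
  [set a : A | (val a <= x)%O] != set0.
Proof.
move=> nx; apply/set0Pn.
case: (pickP (fun a : L => (rk a == 1%N) && (a <= x)%O)) => [a /andP[ra ax]|H].
  by exists (exist _ a ra); rewrite inE.
by move: nx; rewrite {1}(atomic x) big_pred0 ?eqxx.
Qed.

Lemma atoms_bot : [set a : A | (val a <= \bot)%O] = set0.
Proof.
apply/setP => -[v hv]; rewrite !inE /= lex0; apply/negbTE/eqP => E.
by move: hv; rewrite E rk0.
Qed.

Lemma gcc_le_sum (x : L) :
  \sum_(z : L | (z <= x)%O) gcc z = (x == \bot%O)%:R.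
Proof.
rewrite gcc_sum; case: eqP => [->|/eqP nx].
  rewrite atoms_bot (eq_bigl (fun S => S == set0)); last by move=> S; rewrite subset0.
  by rewrite big_pred1_eq cards0.
exact: toggle_sum (atoms_nonempty nx).
Qed.

Lemma gcc_rec (x : L) :
  gcc x = (x == \bot%O)%:R - \sum_(z : L | (z < x)%O) gcc z.
Proof.
rewrite -gcc_le_sum (bigD1 x) //= (eq_bigl (fun z => (z < x)%O)) ?addrK // => z.
by rewrite lt_neqAle andbC.
Qed.

Lemma mobius_gcc (x : L) : mobius \bot%O x = gcc x.
Proof.
have [m hm] : exists m, (below \bot%O x < m)%N by exists (below \bot%O x).+1.
elim: m x hm => [|m IH] x hx //.
case: (eqVneq x \bot%O) => [->|nx].
  by rewrite mobius_refl gcc_rec eqxx big_pred0 ?subr0 // => z; rewrite ltx0.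
rewrite mobius_rec ?le0x 1?eq_sym // gcc_rec (negbTE nx) sub0r; congr (- _).
apply: eq_big => [z|z /andP[_ zx]]; first by rewrite le0x.
rewrite ltnS in hx; apply: IH; apply: leq_trans hx; exact: below_mono (le0x _) zx.
Qed.
End Cross.
Section Count.
Variables (d : Order.disp_t) (L : finTBLatticeType d) (rk : L -> nat) (n : L -> nat).
Local Notation A := (atom_type rk).

Lemma card_cells k :
  #|cells rk n k| = (\sum_(S : {set A} | #|S| == k) n (fjoin S))%N.
Proof.
rewrite /cells -sum1dep_card.
transitivity (\sum_(S : {set A} | #|S| == k) \sum_(j : 'I_(n (fjoin S)) | true) 1)%N.
  rewrite sig_big_dep; apply: eq_bigl => -[S j] /=; by rewrite andbT.
by apply: eq_bigr => S _; rewrite sum1_card card_ord.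
Qed.

Lemma euler_cells :
  \sum_(k < #|{: A}|.+1) (-1) ^+ k * (#|cells rk n k|)%:Z =
  \sum_(x : L) gcc rk x * (n x)%:Z.
Proof.
transitivity (\sum_(S : {set A}) (-1) ^+ #|S| * (n (fjoin S))%:Z).
  rewrite (partition_big (fun S : {set A} => (inord #|S| : 'I_#|{: A}|.+1)) predT) //=.
  apply: eq_bigr => k _; rewrite card_cells -natz natr_sum mulr_sumr.
  apply: eq_big => [S|S /eqP hS]; last by rewrite hS natz.
  rewrite -[RHS]val_eqE /= inordK // ltnS; exact: max_card.
rewrite (partition_big (fun S : {set A} => fjoin S) predT) //=.
apply: eq_bigr => x _; rewrite /gcc mulr_suml.
by apply: eq_bigr => S /eqP <-.
Qed.
End Count.
Section Hom.
Variables (K : fieldType) (d : Order.disp_t) (L : finTBLatticeType d) (rk : L -> nat) (n : L -> nat).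
Variable res : forall x y : L, 'M[K]_(n y, n x).
Hypothesis bdbd : forall k, bd rk res k.+1 *m bd rk res k = 0.
Local Notation A := (atom_type rk).

Lemma dimHC0 : dimHC rk res 0 = (#|cells rk n 0| - \rank (bd rk res 0))%N.
Proof.
rewrite /dimHC /= mxrank1.
by have /capmx_idPl -> := submx1 (bd rk res 0).
Qed.

Lemma dimHCS k : (dimHC rk res k.+1 + \rank (bd rk res k) + \rank (bd rk res k.+1))%N
   = #|cells rk n k.+1|.
Proof.
have sub : (bd rk res k.+1 <= kermx (bd rk res k))%MS by apply/sub_kermxP.
have := mxrankS sub; have := rank_leq_row (bd rk res k).
rewrite /dimHC /= mxrank_ker.
have /capmx_idPl -> := sub.
set a := \rank (bd rk res k); set b := \rank (bd rk res k.+1); set c := #|cells rk n k.+1|; clearbody a b c; lia.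
Qed.

Lemma euler_partial N :
  \sum_(k < N.+1) (-1) ^+ k * (dimHC rk res k)%:Z =
  \sum_(k < N.+1) (-1) ^+ k * (#|cells rk n k|)%:Z
   - (-1) ^+ N * (\rank (bd rk res N))%:Z.
Proof.
elim: N => [|N IH].
  rewrite !big_ord1 dimHC0 expr0 !mul1r.
  have := rank_leq_col (bd rk res 0).
  set a := \rank (bd rk res 0); set c := #|cells rk n 0|; clearbody a c.
  move=> h; rewrite subzn //.
rewrite big_ord_recr /= IH [in RHS]big_ord_recr /=.
have := dimHCS N.
set a := \rank (bd rk res N); set b := \rank (bd rk res N.+1).
set c := #|cells rk n N.+1|; set D := dimHC rk res N.+1; clearbody a b c D.
move=> hD; have -> : (D : int) = c%:Z - a%:Z - b%:Z by rewrite -hD !PoszD; ring.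
rewrite exprS; ring.
Qed.

Lemma euler_eq : euler_HC rk res =
  \sum_(k < #|{: A}|.+1) (-1) ^+ k * (#|cells rk n k|)%:Z.
Proof.
rewrite /euler_HC euler_partial.
have -> : \rank (bd rk res #|{: A}|) = 0%N.
  apply/eqP; rewrite -leqn0; apply: leq_trans (rank_leq_row _) _.
  rewrite card_cells big_pred0 // => S.
  by rewrite eqn_leq ltnNge max_card andbF.
by rewrite mulr0 subr0.
Qed.
End Hom.
Section Eps.
Variables (K : fieldType) (d : Order.disp_t) (L : finTBLatticeType d) (rk : L -> nat).
Local Notation A := (atom_type rk).

Definition cnt (T : {set A}) (y : A) : nat :=
  #|[set p in T | (enum_rank p < enum_rank y)%N]|.

Lemma eps_count1 (S T : {set A}) y : S :\: T = [set y] -> eps_count S T = cnt T y.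
Proof.
rewrite /eps_count /cnt => hST.
have inj : injective (fun q : A => (q, y)) by move=> a b [].
transitivity #|(fun q : A => (q, y)) @: [set p in T | (enum_rank p < enum_rank y)%N]|;
  last exact: card_imset.
apply: eq_card => -[p q].
rewrite inE /= hST in_set1.
apply/idP/imsetP => [/andP[/andP[pT /eqP ->] lt]|[p' hp' [-> ->]]].
  by exists p; rewrite // inE pT lt.
by move: hp'; rewrite inE => /andP[-> ->]; rewrite eqxx.
Qed.

Lemma cnt_U1 (U : {set A}) x y : x \notin U ->
  cnt (x |: U) y = (cnt U y + (enum_rank x < enum_rank y))%N.
Proof.
move=> xU; rewrite /cnt; case Px: (enum_rank x < enum_rank y)%N.
  have -> : [set p in x |: U | (enum_rank p < enum_rank y)%N] =
            x |: [set p in U | (enum_rank p < enum_rank y)%N].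
    by apply/setP => p; rewrite !inE; case: eqP => [->|]; rewrite ?Px.
  by rewrite cardsU1 inE (negbTE xU) addnC.
have -> : [set p in x |: U | (enum_rank p < enum_rank y)%N] =
          [set p in U | (enum_rank p < enum_rank y)%N].
  by apply/setP => p; rewrite !inE; case: eqP => [->|] //=; rewrite Px (negbTE xU).
by rewrite addn0.
Qed.

Lemma setD_U1 (S U : {set A}) x z : S :\: U = [set x; z] -> x != z ->
  S :\: (x |: U) = [set z].
Proof.
move=> hSU xz; apply/setP => y.
have := congr1 (fun B : {set A} => y \in B) hSU; rewrite /= !inE => h.
rewrite negb_or -andbA h.
by case: (eqVneq y x) => [->|yx]; rewrite ?eqxx ?yx /= ?(negbTE xz).
Qed.

Lemma setU1D (U : {set A}) x : x \notin U -> (x |: U) :\: U = [set x].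
Proof.
move=> xU; apply/setP => y; rewrite !inE.
by case: (eqVneq y x) => [->|] /=; rewrite ?xU // andNb.
Qed.

Lemma eps_sum (S U : {set A}) k : #|S| = k.+2 -> #|U| = k ->
  \sum_(T : {set A} | [&& #|T| == k.+1, U \subset T & T \subset S])
     eps K S T * eps K T U = 0.
Proof.
move=> hS hU.
case: (boolP (U \subset S)) => US; last first.
  rewrite big_pred0 // => T; apply/negbTE; apply: contra US => /and3P[_ UT TS].
  exact: subset_trans UT TS.
have /cards2P [a [b [ab hab]]] : #|S :\: U| == 2.
  rewrite cardsD (setIidPr US) hS hU; apply/eqP; lia.
have memSU y : (y \in S) && (y \notin U) = (y == a) || (y == b).
  by have := congr1 (fun B : {set A} => y \in B) hab; rewrite /= !inE andbC.
have /andP[aS aU] : (a \in S) && (a \notin U) by rewrite memSU eqxx.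
have /andP[bS bU] : (b \in S) && (b \notin U) by rewrite memSU eqxx orbT.
have charT (T : {set A}) : [&& #|T| == k.+1, U \subset T & T \subset S] =
               (T \in [set a |: U; b |: U]).
  rewrite !inE; apply/idP/idP.
    case/and3P => /eqP hT UT TS.
    have : #|T :\: U| == 1 by rewrite cardsD (setIidPr UT) hT hU; apply/eqP; lia.
    case/cards1P => x hx.
    have : x \in T :\: U by rewrite hx set11.
    rewrite inE => /andP[xU xT].
    have eT : T = x |: U.
      apply/setP => y; rewrite !inE.
      case: (boolP (y \in U)) => yU /=; first by rewrite orbT (subsetP UT).
      have := congr1 (fun B : {set A} => y \in B) hx; rewrite /= !inE yU /= => <-.
      by rewrite orbF.
    have : (x == a) || (x == b) by rewrite -memSU (subsetP TS) ?xU.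
    by case/orP => /eqP <-; rewrite eT eqxx ?orbT.
  by case/orP => /eqP ->; rewrite cardsU1 ?aU ?bU hU subsetUr subUset sub1set ?aS ?bS US /= add1n eqxx.
rewrite (eq_bigl _ _ charT).
have neq : a |: U != b |: U.
  apply/negP => /eqP E; have := setU11 a U; rewrite E !inE (negbTE aU) orbF.
  by move/eqP => abE; rewrite abE eqxx in ab.
rewrite big_setU1 ?inE //= big_set1.
rewrite /eps (eps_count1 (setD_U1 hab ab)) (eps_count1 (setU1D aU)).
have hba : S :\: U = [set b; a] by rewrite hab setUC.
rewrite (eps_count1 (setD_U1 hba _)) ?(eq_sym b) // (eps_count1 (setU1D bU)).
rewrite !cnt_U1 //.
case: (ltngtP (enum_rank a) (enum_rank b)) => h /=.
- rewrite addn1 addn0 exprS; ring.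
- rewrite addn1 addn0 exprS; ring.
- by move/val_inj/enum_rank_inj: h => abE; rewrite abE eqxx in ab.
Qed.
End Eps.
Section BdBd.
Variables (K : fieldType) (d : Order.disp_t) (L : finTBLatticeType d) (rk : L -> nat) (n : L -> nat).
Variable res : forall x y : L, 'M[K]_(n y, n x).
Hypothesis res_comp : forall x y z : L, (x <= y)%O -> (y <= z)%O ->
                res x z = res y z *m res x y.
Local Notation A := (atom_type rk).
Local Notation cell := (cell rk n).

Definition bdE (x y : cell) : K :=
  if tag y \subset tag x then
    (eps K (tag x) (tag y) *
     res (fjoin (tag y)) (fjoin (tag x)) (tagged x) (tagged y))%R
  else 0%R.

Lemma fjoin_sub (S T : {set A}) : S \subset T -> (fjoin S <= fjoin T)%O.
Proof. exact: le_joins. Qed.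

Lemma bdbd k : bd rk res k.+1 *m bd rk res k = 0.
Proof.
apply/matrixP => r c; rewrite !mxE.
under eq_bigr => j _ do rewrite !mxE /=.
rewrite -(big_enum_val (fun m => bdE (enum_val r) m * bdE m (enum_val c))) /=.
have := enum_valP r; have := enum_valP c.
move: (enum_val r) (enum_val c) => [S i] [U l]; rewrite !inE /= => /eqP hU /eqP hS.
transitivity (\sum_(T : {set A} | #|T| == k.+1) \sum_(j : 'I_(n (fjoin T)) | true)
   bdE (existT _ S i) (existT _ T j) * bdE (existT _ T j) (existT _ U l)).
  by rewrite sig_big_dep; apply: eq_bigl => -[T j]; rewrite /= inE andbT.
transitivity (\sum_(T : {set A} | #|T| == k.+1)
   (if (U \subset T) && (T \subset S) then eps K S T * eps K T U else 0) *
   res (fjoin U) (fjoin S) i l).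
  apply: eq_bigr => T _; rewrite /bdE /=.
  case: (boolP (T \subset S)) => TS; case: (boolP (U \subset T)) => UT /=;
    try by rewrite [RHS]mul0r; apply: big1 => j _; rewrite ?mul0r ?mulr0.
  rewrite (res_comp (fjoin_sub UT) (fjoin_sub TS)) mxE mulr_sumr.
  by apply: eq_bigr => j _; ring.
rewrite -mulr_suml; apply/eqP; rewrite mulf_eq0; apply/orP; left; apply/eqP.
rewrite -[RHS](eps_sum K hS hU) [RHS]big_mkcondr /=.
by [].
Qed.
End BdBd.

Unset Implicit Arguments.

Theorem corollary4 (K : fieldType) (d : Order.disp_t) (L : finTBLatticeType d)
  (rk : L -> nat)
  (rk0 : rk \bot%O = 0%N)
  (rk_graded : forall x y : L, covers x y -> rk y = (rk x).+1)
  (atomic : forall x : L, x = (\join_(a : L | (rk a == 1%N) && (a <= x)%O) a)%O)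
  (n : L -> nat) (res : forall x y : L, 'M[K]_(n y, n x))
  (res_id : forall x : L, res x x = 1%:M)
  (res_comp : forall x y z : L, (x <= y)%O -> (y <= z)%O ->
                res x z = res y z *m res x y) :
  euler_HC rk res = ((chi_poly n)^`()).[1%R] /\
  ((chi_poly n)^`()).[1%R] = (\sum_(x : L) mobius \bot%O x * (n x)%:Z)%R.
Proof.
split; last exact: chi_deriv.
rewrite chi_deriv (euler_eq (bdbd rk res_comp)) euler_cells.
by apply: eq_bigr => x _; rewrite (mobius_gcc rk0 atomic).
Qed.
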